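(* For every countable linear order $Y$, $\mathsf{rk}(Y)=\mathsf{rk}(Y^* )$, where $Y^*$ denotes $Y$ with the reversed ordering.
   Context: Let $\mathcal F$ be the class of finite linear orders (language $\{<\}$); countable linear orders are the structures considered; substructures are suborders and $\mathsf{age}(X)$ is the set of finite suborders of $X$. For $A\le B$, $B$ is a prime extension of $A$ if $|B\setminus A|=1$; a realization of $B$ in $X$ (where $A\le X$) is $C\le X$ with $A\le C$ and an order-isomorphism $B\to C$ fixing $A$ pointwise. For $F\in\mathsf{age}(X)$ define by recursion: $\mathsf{rk}_X(F)\ge0$ always; $\mathsf{rk}_X(F)\ge\alpha+1$ iff every prime extension $B\in\mathcal F$ of $F$ has a realization $C$ in $X$ with $\mathsf{rk}_X(C)\ge\alpha$; for limit $\alpha$, $\mathsf{rk}_X(F)\ge\alpha$ iff $\mathsf{rk}_X(F)\ge\beta$ for all $\beta<\alpha$. $\mathsf{rk}_X(F)=\sup\{\alpha:\mathsf{rk}_X(F)\ge\alpha\}$ (or $\infty$), and $\mathsf{rk}(X)=\mathsf{rk}_X(\emptyset)$. *)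

(* Defs.v *)
From HB Require Import structures.
From mathcomp Require Import all_boot all_order.
From mathcomp Require Import finmap.
Unset Printing Implicit Defensive.
Local Open Scope fset_scope.

Definition strict_linear_order (T : Type) (lt : T -> T -> bool) : Prop :=
  [/\ (forall x, ~~ lt x x),
      (forall x y z, lt x y -> lt y z -> lt x z) &
      (forall x y, x <> y -> lt x y \/ lt y x)].

Definition rev_order (X : Type) (lt : rel X) : rel X := fun x y => lt y x.

(* A prime extension B of F (a finite linear order having F
   as a suborder with exactly one extra point) is, up to isomorphism over F,
   a strict linear order [ltB] on the carrier [option F] (the new point is
   [None]) whose restriction to the points [Some a] is the order of X. *)
Definition prime_ext (X : choiceType) (lt : rel X) (F : {fset X})
    (ltB : rel (option F)) : Prop :=
  strict_linear_order (option F) ltB /\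
  (forall a b : F, ltB (Some a) (Some b) = lt (val a) (val b)).

(* A realization of B in X: a suborder C = F ∪ {x}, x ∉ F, with an
   isomorphism B -> C fixing F pointwise (necessarily None |-> x). *)
Definition realizes (X : choiceType) (lt : rel X) (F : {fset X})
    (ltB : rel (option F)) (x : X) : Prop :=
  x \notin F /\
  (forall a : F, ltB None (Some a) = lt x (val a) /\
                 ltB (Some a) None = lt (val a) x).

(* rk_ge lt R a F  means  rk_X(F) >= alpha, where the ordinal alpha is the
   one represented by the node a of the well-founded relation R (i.e. the
   well-founded rank of a).  The clause "for every beta < alpha, every prime
   extension of F has a realization C with rk_X(C) >= beta" is equivalent
   to the successor/limit recursion of the paper (0: vacuous; alpha+1: by
   monotonicity; limit: by unfolding). *)
Inductive rk_ge (X : choiceType) (lt : rel X) (I : Type) (R : I -> I -> Prop)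
  : I -> {fset X} -> Prop :=
| RkGe (a : I) (F : {fset X}) :
    (forall b, R b a ->
       forall ltB : rel (option F), prime_ext X lt F ltB ->
         exists x, realizes X lt F ltB x /\ rk_ge X lt I R b (x |` F)) ->
    rk_ge X lt I R a F.

(* Main.v *)
Require Import Defs.
From HB Require Import structures.
From mathcomp Require Import all_boot all_order.
From mathcomp Require Import finmap.
Local Open Scope fset_scope.

Lemma slo_rev (T : Type) (r : T -> T -> bool) :
  strict_linear_order T r -> strict_linear_order T (fun x y => r y x).
Proof.
case=> H1 H2 H3; split.
- by [].
- by move=> x y z a b; exact: (H2 _ _ _ b a).
- by move=> x y /H3 [] h; [right|left].
Qed.

Lemma pe_rev (Y : choiceType) (lt : rel Y) (F : {fset Y}) (ltB : rel (option F)) :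
  prime_ext Y (rev_order Y lt) F ltB -> prime_ext Y lt F (fun u v => ltB v u).
Proof.
case=> slo hB; split; first exact: slo_rev.
by move=> u v; rewrite /= hB.
Qed.

Lemma real_rev (Y : choiceType) (lt : rel Y) (F : {fset Y}) (ltB : rel (option F)) x :
  realizes Y lt F (fun u v => ltB v u) x -> realizes Y (rev_order Y lt) F ltB x.
Proof.
case=> xF hx; split=> // u; have [h1 h2] := hx u; by split.
Qed.

Fixpoint rk_rev (Y : choiceType) (lt : rel Y) (I : Type) (R : I -> I -> Prop) a F
  (H : rk_ge Y lt I R a F) {struct H} : rk_ge Y (rev_order Y lt) I R a F :=
  match H with
  | RkGe a F h => RkGe _ _ _ _ a F (fun b Rb ltB pe =>
      match h b Rb _ (pe_rev _ _ _ _ pe) with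
      | ex_intro x (conj r k) => ex_intro _ x (conj (real_rev _ _ _ _ _ r) (rk_rev _ _ _ _ _ _ k))
      end)
  end.

Theorem proposition6p8 (Y : countType) (lt : rel Y) :
  strict_linear_order Y lt ->
  forall (I : Type) (R : I -> I -> Prop), well_founded R ->
  forall a : I,
    rk_ge Y lt I R a fset0 <-> rk_ge Y (rev_order Y lt) I R a fset0.
Proof.
move=> _ I R _ a; split; first exact: rk_rev.
move=> h; exact: (rk_rev _ (rev_order Y lt) _ _ _ _ h).
Qed.
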